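(* Let $m_1,m_2\in\{m_L,m_R\}$. Then both cutoff profiles $(\xi_L(m_1,m_2),\xi_L(m_2,m_1))$ and $(\xi_R(m_1,m_2),\xi_R(m_2,m_1))$ are strict equilibria and neighborhood invader strategy profiles of the induced game $\Gamma(F_{m_1},F_{m_2})$.
   Context: Two players; types drawn independently from a distribution on $[0,1]$ with continuous CDF $F$ and density $f>0$ on $[0,1]$; each chooses $L$ or $R$; a type-$u$ player gets $1-u$ if both choose $L$, $u$ if both choose $R$, $0$ otherwise. Players first send messages via the message function $\mu^*$: type $u$ sends $m_L$ if $u\le1/2$ and $m_R$ if $u>1/2$. $F_{m_L}$ is $F$ conditioned on $[0,1/2]$ and $F_{m_R}$ is $F$ conditioned on $(1/2,1]$. $\xi_L(m,m')=0$ if $m=m'=m_R$ and $1$ otherwise; $\xi_R(m,m')=1$ if $m=m'=m_L$ and $0$ otherwise. Induced game $\Gamma(F_{m_1},F_{m_2})$: player $i\in\{1,2\}$ has type drawn from $F_{m_i}$ (independently) and chooses a cutoff $x_i\in[0,1]$, playing $L$ iff her type $\le x_i$. $\pi^{m_1,m_2}(x_1,x_2)=\int[\mathbf 1\{u\le x_1\}(1-u)F_{m_2}(x_2)+\mathbf 1\{u>x_1\}u(1-F_{m_2}(x_2))]dF_{m_1}(u)$ is player 1's expected payoff; $\pi^{m_2,m_1}(x_2,x_1)$ is player 2's. Cutoffs $x_i,x_i'$ of player $i$ are equivalent ($x_i\approx x_i'$) if $F_{m_i}(x_i)=F_{m_i}(x_i')$. $(x_1,x_2)$ is a strict equilibrium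 if $\pi^{m_1,m_2}(x_1',x_2)\ge\pi^{m_1,m_2}(x_1,x_2)$ implies $x_1'\approx x_1$ and $\pi^{m_2,m_1}(x_2',x_1)\ge\pi^{m_2,m_1}(x_2,x_1)$ implies $x_2'\approx x_2$. A strict equilibrium $(x_1,x_2)$ is a neighborhood invader strategy profile if there exists $\epsilon>0$ such that for every $(x_1',x_2')$ with $x_1'\not\approx x_1$, $x_2'\not\approx x_2$, $|x_1'-x_1|<\epsilon$, $|x_2'-x_2|<\epsilon$, either $\pi^{m_1,m_2}(x_1,x_2')>\pi^{m_1,m_2}(x_1',x_2')$ or $\pi^{m_2,m_1}(x_2,x_1')>\pi^{m_2,m_1}(x_2',x_1')$. *)

(* Defs.v *)
From HB Require Import structures.
From mathcomp Require Import all_boot all_order all_algebra.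
From mathcomp Require Import all_classical all_reals all_analysis.
Set Implicit Arguments. Unset Strict Implicit. Unset Printing Implicit Defensive.
Import Order.TTheory GRing.Theory Num.Theory.
Local Open Scope classical_set_scope.
Local Open Scope ring_scope.

Inductive msg := mL | mR.

Definition msg_eqb (a b : msg) : bool :=
  match a, b with mL, mL | mR, mR => true | _, _ => false end.

Section Game.
Variable R : realType.

Definition leb_meas := (@lebesgue_measure R).

Definition is_pos_density (f : R -> R) : Prop :=
  [/\ leb_meas.-integrable `[0%R, 1%R] (EFin \o f),
      (forall x, 0 <= x <= 1 -> 0 < f x) &
      Rintegral leb_meas `[0%R, 1%R] f = 1].

(* Support of the conditional type distribution after message m. *)
Definition msupp (m : msg) : set R :=
  match m with
  | mL => `[0%R, 2^-1]
  | mR => `]2^-1, 1%R]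
  end.

Definition Fm (f : R -> R) (m : msg) (x : R) : R :=
  Rintegral leb_meas (msupp m `&` `]-oo, x]) f / Rintegral leb_meas (msupp m) f.

(* pi^{m1,m2}(x1,x2): expected payoff of a player with message m1 using cutoff
   x1 against an opponent with message m2 using cutoff x2; the integral
   against dF_{m1} is written through the density f / F(msupp m1). *)
Definition payoff (f : R -> R) (m1 m2 : msg) (x1 x2 : R) : R :=
  Rintegral leb_meas (msupp m1)
    (fun u => (if u <= x1 then (1 - u) * Fm f m2 x2
               else u * (1 - Fm f m2 x2)) * f u)
  / Rintegral leb_meas (msupp m1) f.

Definition cutoff_equiv (f : R -> R) (m : msg) (x x' : R) : Prop :=
  Fm f m x = Fm f m x'.

Definition in01 (x : R) : Prop := 0 <= x <= 1.

Definition strict_eq (f : R -> R) (m1 m2 : msg) (x1 x2 : R) : Prop :=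
  [/\ in01 x1, in01 x2,
      (forall x1', in01 x1' -> payoff f m1 m2 x1' x2 >= payoff f m1 m2 x1 x2 ->
                   cutoff_equiv f m1 x1' x1) &
      (forall x2', in01 x2' -> payoff f m2 m1 x2' x1 >= payoff f m2 m1 x2 x1 ->
                   cutoff_equiv f m2 x2' x2)].

Definition nis_profile (f : R -> R) (m1 m2 : msg) (x1 x2 : R) : Prop :=
  strict_eq f m1 m2 x1 x2 /\
  exists eps : R, 0 < eps /\
    forall x1' x2', in01 x1' -> in01 x2' ->
      ~ cutoff_equiv f m1 x1' x1 -> ~ cutoff_equiv f m2 x2' x2 ->
      `|x1' - x1| < eps -> `|x2' - x2| < eps ->
      payoff f m1 m2 x1 x2' > payoff f m1 m2 x1' x2' \/
      payoff f m2 m1 x2 x1' > payoff f m2 m1 x2' x1'.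

End Game.

Definition xiL (R : realType) (m m' : msg) : R :=
  match m, m' with mR, mR => 0 | _, _ => 1 end.
Definition xiR (R : realType) (m m' : msg) : R :=
  match m, m' with mL, mL => 1 | _, _ => 0 end.

(* Main.v *)
Require Import Defs.
From HB Require Import structures.
From mathcomp Require Import all_boot all_order all_algebra.
From mathcomp Require Import all_classical all_reals all_analysis.
From mathcomp Require Import lra.
Import Order.TTheory GRing.Theory Num.Theory.
Import numFieldNormedType.Exports.
Local Open Scope classical_set_scope.
Local Open Scope ring_scope.

Section S.
Variable R : realType.
Notation mu := (@lebesgue_measure R).

Lemma int_pos_itv (h : R -> R) (a b : R) : a < b ->
  measurable_fun (`]a, b[ : set (measurableTypeR R)) h -> (forall u, a < u < b -> 0 < h u) ->
  (0 < \int[mu]_(x in `]a, b[) (h x)%:E)%E.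
Proof.
move=> ab mh hp.
have mD : measurable (`]a, b[ : set R) by [].
rewrite lt_neqAle integral_ge0 ?andbT; last first.
  by move=> x; rewrite /= in_itv /= => /hp/ltW; rewrite lee_fin.
apply/negP => /eqP I0.
pose E (n : nat) := `]a, b[ `&` h @^-1` `[n.+1%:R^-1, +oo[.
have mE n : measurable (E n) by apply: mh => //; apply: measurable_itv.
have E0 n : mu (E n) = 0%E.
  have := @le_integral_comp_abse _ _ R mu _ mD (EFin \o h) (n.+1%:R^-1) id
     (@measurable_id _ _ setT) (fun r r0 => r0) (fun x y _ _ xy => xy).
  have -> : (\int[mu]_(x in `]a, b[) `|(EFin \o h) x|)%E = 0%E.
    rewrite I0; apply: eq_integral => x; rewrite inE /= in_itv /= => /hp/ltW h0.
    by rewrite ger0_norm.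
  move=> /(_ _ _)/= H.
  have {}H := H ((measurable_realfun.measurable_EFinP _ _).2 mh).
  have {}H := H ltac:(by rewrite invr_gt0).
  apply/eqP; rewrite eq_le measure_ge0 andbT leNgt; apply/negP => mpos.
  have : (0 < (n.+1%:R^-1)%:E * mu (E n))%E.
    by apply: mule_gt0 => //; rewrite lte_fin invr_gt0.
  rewrite ltNge (le_trans _ H) // le_eqVlt; apply/orP; left; apply/eqP.
  congr (_ * mu _)%E; apply/seteqP; split => x [xab hx]; split => //=.
    by rewrite ger0_norm ?lee_fin; [move: hx; rewrite /= in_itv /= andbT|apply/ltW/hp].
  by move: hx; rewrite /= in_itv /= andbT ger0_norm ?lee_fin //; apply/ltW/hp.
have : mu.-negligible (\bigcup_n E n).
  apply: negligible_bigcup => n; rewrite /negligible; exists (E n); split; [exact: mE|exact: E0|by []].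
move=> [N [mN N0 sN]].
have : `]a, b[ `<=` N.
  move=> x xab; apply: sN.
  have hx := hp _ xab.
  exists (Num.Def.trunc ((h x)^-1)) => //; split => //=.
  rewrite in_itv /= andbT.
  rewrite -[leRHS]invrK lef_pV2 ?posrE ?invr_gt0 //; apply/ltW/truncnS_gt.
move/(le_measure mu); rewrite !inE => /(_ mD mN).
move=> H; have {H} : (mu `]a, b[ <= 0)%E by rewrite -N0.
rewrite (lebesgue_measure_itv `]a, b[) /= lte_fin ab.
by rewrite leNgt => /negP; apply; rewrite lte_fin subr_gt0.
Qed.

Lemma Rint_pos (A : set (measurableTypeR R)) (h : R -> R) (a b : R) : measurable A ->
  mu.-integrable A (EFin \o h) -> (forall u, A u -> 0 <= h u) -> a < b ->
  `]a, b[ `<=` A -> (forall u, a < u < b -> 0 < h u) ->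
  0 < Rintegral mu A h.
Proof.
move=> mA ih h0 ab sA hp; apply: fine_gt0.
have mh : measurable_fun A h.
  by apply/measurable_realfun.measurable_EFinP; exact: measurable_int ih.
have /fin_numPlt/andP[_ ->] := integrable_fin_num mA ih; rewrite andbT.
apply: (lt_le_trans (@int_pos_itv h a b ab (measurable_funS mA sA mh) hp)).
apply: ge0_subset_integral => //.
- exact/measurable_realfun.measurable_EFinP.
Qed.

Lemma meas_G (D : set (measurableTypeR R)) (f : R -> R) (q x : R) : measurable D ->
  measurable_fun D f ->
  measurable_fun D (fun u => (if u <= x then (1 - u) * q else u * (1 - q)) * f u).
Proof.
move=> mD mf; apply: measurable_realfun.measurable_funM => //.
apply: (measurable_funS measurableT) => //.
apply: measurable_fun_ifT.
- by apply: measurable_realfun.measurable_fun_ler.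
- by apply: measurable_realfun.measurable_funM => //; apply: measurable_realfun.measurable_funB.
- by apply: measurable_realfun.measurable_funM.
Qed.


Definition lo (m : msg) : R := if m is mL then 0 else 2^-1.
Definition hi (m : msg) : R := if m is mL then 2^-1 else 1.

Lemma half_bds : 0 < (2^-1 : R) < 1.
Proof. by rewrite invr_gt0 ltr0n /= invf_lt1 ?ltr0n // ltr1n. Qed.

Lemma msupp_meas m : measurable (@msupp R m : set (measurableTypeR R)).
Proof. by case: m => /=; exact: measurable_itv. Qed.

Lemma msupp_sub m : @msupp R m `<=` `[0, 1].
Proof.
have [h0 h1] := andP half_bds.
case: m => u /=; rewrite !in_itv /= => /andP[a b]; apply/andP; split; lra.
Qed.

Lemma itv_in m : `]lo m, hi m[ `<=` @msupp R m.
Proof.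
have [h0 h1] := andP half_bds.
case: m => u /=; rewrite !in_itv /= => /andP[a b]; apply/andP; split; lra.
Qed.

Lemma lo_hi m : lo m < hi m.
Proof. have [h0 h1] := andP half_bds; case: m => /=; lra. Qed.


Section F.
Variable f : R -> R.
Hypothesis hf : is_pos_density f.

Let Z m := Rintegral mu (@msupp R m) f.

Lemma fpos u : 0 <= u <= 1 -> 0 < f u.
Proof. by case: hf => _ H _; apply: H. Qed.

Lemma int_f m : mu.-integrable (@msupp R m) (EFin \o f).
Proof.
case: hf => H _ _; apply: (integrableS _ (msupp_meas m) (msupp_sub m) H).
exact: measurable_itv.
Qed.

Lemma mf m : measurable_fun (@msupp R m : set (measurableTypeR R)) f.
Proof.
by apply/measurable_realfun.measurable_EFinP; exact: measurable_int (int_f m).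
Qed.

Lemma fge0 m u : msupp m u -> 0 <= f u.
Proof.
move=> /(msupp_sub m); rewrite /= in_itv /= => H; exact/ltW/fpos.
Qed.

Lemma Zpos m : 0 < Z m.
Proof.
apply: (@Rint_pos _ f (lo m) (hi m) (msupp_meas m) (int_f m)).
- exact: fge0.
- exact: lo_hi.
- exact: itv_in.
- move=> u /(@itv_in m u)/(@msupp_sub m u); rewrite /= in_itv /=.
  exact: fpos.
Qed.

Definition G q x u := (if u <= x then (1 - u) * q else u * (1 - q)) * f u.

Lemma intG m q x : mu.-integrable (@msupp R m) (EFin \o G q x).
Proof.
apply: (le_integrable (msupp_meas m) _ _ (integrableZl (msupp_meas m) (`|q| + 1) (int_f m))).
  by apply/measurable_realfun.measurable_EFinP; apply: meas_G; [exact: msupp_meas|exact: mf].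
move=> u mu_; have := @msupp_sub m u mu_; rewrite /= in_itv /= => /andP[u0 u1].
rewrite lee_fin /G normrM normrM (ger0_norm (@fge0 m u mu_)).
rewrite ler_wpM2r ?(@fge0 m u mu_) //.
case: ifP => _; rewrite normrM.
  rewrite (ger0_norm (_ : 0 <= 1 - u)) ?subr_ge0 //.
  rewrite [X in _ <= X]ger0_norm ?addr_ge0 //.
  have := normr_ge0 q; nra.
rewrite [X in _ <= X]ger0_norm ?addr_ge0 // (ger0_norm u0).
have := ler_normB 1 q; rewrite normr1.
have := normr_ge0 (1 - q); nra.
Qed.


Lemma msupp_bds m u : msupp m u -> lo m <= u <= hi m.
Proof.
have [h0 h1] := andP half_bds.
case: m; rewrite /= in_itv /= => /andP[a b]; apply/andP; split; lra.
Qed.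


Lemma Fm_hi m x : hi m <= x -> Fm f m x = Fm f m 1.
Proof.
move=> H; rewrite /Fm; congr (Rintegral _ _ _ / _).
apply/seteqP; split => u [mu_ _]; split => //; rewrite /= in_itv /=;
  have /andP[_ b] := @msupp_bds m u mu_.
  have := @msupp_sub m u mu_; rewrite /= in_itv /= => /andP[_ ->] //.
exact: le_trans H.
Qed.

Lemma Fm_lo m x : 0 <= x <= lo m -> Fm f m x = Fm f m 0.
Proof.
case: m => /= /andP[x0 xl].
  by have -> : x = 0 by apply/le_anti/andP.
rewrite /Fm; congr (Rintegral _ _ _ / _).
have [h0 h1] := andP half_bds.
apply/seteqP; split => u [/=]; rewrite !in_itv /= => /andP[a b] c; lra.
Qed.

Lemma Fm1 m : Fm f m 1 = 1.
Proof.
rewrite /Fm setIidl; first by rewrite divff // gt_eqF // (Zpos m).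
move=> u /msupp_bds /andP[_ b]; rewrite /= in_itv /=.
by case: m b => /= b; [have [_ /ltW h1] := andP half_bds; apply: le_trans h1|].
Qed.

Lemma Fm0 m : Fm f m 0 = 0.
Proof.
rewrite /Fm; case: m.
  have -> : @msupp R mL `&` `]-oo, 0] = [set 0].
    apply/seteqP; split => u /=.
      rewrite !in_itv /= => -[/andP[a _] b]; apply/le_anti/andP; split => //.
    move=> ->; rewrite !in_itv /= lexx /=; split => //.

  by rewrite Rintegral_set1 mul0r.
have -> : @msupp R mR `&` `]-oo, 0] = set0.
  apply/seteqP; split => u //=.
  have [h0 h1] := andP half_bds.
  rewrite !in_itv /= => -[/andP[a _] b]; lra.
by rewrite Rintegral_set0 mul0r.
Qed.


Lemma hi_le1 m : hi m <= 1.
Proof. by case: m => //=; have [_ /ltW] := andP half_bds. Qed.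

Lemma lo_ge0 m : 0 <= lo m.
Proof. by case: m => //=; have [/ltW] := andP half_bds. Qed.

Lemma intGB m q x x' :
  mu.-integrable (@msupp R m) (EFin \o (fun u => G q x u - G q x' u)).
Proof.
apply: (eq_integrable (msupp_meas m) _ _ _ (integrableB (msupp_meas m) (intG m q x) (intG m q x'))).
by move=> u _ /=; rewrite EFinB.
Qed.

Lemma better m m' y x x' :
  0 < Rintegral mu (@msupp R m) (fun u => G (Fm f m' y) x u - G (Fm f m' y) x' u) ->
  payoff f m m' x' y < payoff f m m' x y.
Proof.
move=> H; rewrite /payoff ltr_pM2r ?invr_gt0; last exact: Zpos.
move: H; rewrite RintegralB; [by rewrite subr_gt0|exact: msupp_meas|exact: intG|exact: intG].
Qed.

Lemma best1 m m' y x' : Fm f m' y = 1 -> in01 x' ->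
  payoff f m m' 1 y <= payoff f m m' x' y -> Fm f m x' = Fm f m 1.
Proof.
move=> q1 /andP[x0 x1] H.
case: (lerP (hi m) x') => hx; first exact: Fm_hi.
exfalso; move: H; apply/negP; rewrite -ltNge; apply: better; rewrite q1.
apply: (@Rint_pos _ _ (Num.max x' (lo m)) (hi m) (msupp_meas m) (intGB _ _ _ _)).
- move=> u mu_; have /andP[a b] := @msupp_bds m u mu_.
  have h1 := hi_le1 m; have f0 := @fge0 m u mu_.
  rewrite /G (_ : u <= 1); last exact: le_trans h1.
  case: ifP => _; nra.
- by rewrite gt_max hx lo_hi.
- move=> u; rewrite /= in_itv /= => /andP[]; rewrite gt_max => /andP[a b] c.
  by apply: itv_in; rewrite /= in_itv /= b c.
- move=> u /andP[]; rewrite gt_max => /andP[a b] c.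
  have h1 := hi_le1 m; have l0 := lo_ge0 m.
  have fu : 0 < f u by apply: fpos; apply/andP; split; lra.
  rewrite /G (_ : u <= 1); last by lra.
  rewrite (_ : u <= x' = false); last by apply/negbTE; rewrite -ltNge.
  nra.
Qed.

Lemma best0 m m' y x' : Fm f m' y = 0 -> in01 x' ->
  payoff f m m' 0 y <= payoff f m m' x' y -> Fm f m x' = Fm f m 0.
Proof.
move=> q0 /andP[x0 x1] H.
case: (lerP x' (lo m)) => hx; first by apply: Fm_lo; rewrite x0 hx.
exfalso; move: H; apply/negP; rewrite -ltNge; apply: better; rewrite q0.
apply: (@Rint_pos _ _ (lo m) (Num.min x' (hi m)) (msupp_meas m) (intGB _ _ _ _)).
- move=> u mu_; have /andP[a b] := @msupp_bds m u mu_.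
  have l0 := lo_ge0 m; have f0 := @fge0 m u mu_.
  rewrite /G; case: ifP => h; case: ifP => h'; nra.
- by rewrite lt_min hx lo_hi.
- move=> u; rewrite /= in_itv /= => /andP[a]; rewrite lt_min => /andP[b c].
  by apply: itv_in; rewrite /= in_itv /= a c.
- move=> u /andP[a]; rewrite lt_min => /andP[b c].
  have h1 := hi_le1 m; have l0 := lo_ge0 m.
  have fu : 0 < f u by apply: fpos; apply/andP; split; lra.
  rewrite /G (_ : u <= 0 = false); last by apply/negbTE; rewrite -ltNge; lra.
  rewrite (_ : u <= x'); last by lra.
  nra.
Qed.


Lemma in01_1 : in01 (1 : R). Proof. by rewrite /in01 ler01 lexx. Qed.
Lemma in01_0 : in01 (0 : R). Proof. by rewrite /in01 ler01 lexx. Qed.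

Lemma se1 m1 m2 : strict_eq f m1 m2 1 1.
Proof.
split; [exact: in01_1|exact: in01_1| |].
- by move=> x h H; exact: (best1 _ _ _ _ (Fm1 m2) h H).
- by move=> x h H; exact: (best1 _ _ _ _ (Fm1 m1) h H).
Qed.

Lemma se0 m1 m2 : strict_eq f m1 m2 0 0.
Proof.
split; [exact: in01_0|exact: in01_0| |].
- by move=> x h H; exact: (best0 _ _ _ _ (Fm0 m2) h H).
- by move=> x h H; exact: (best0 _ _ _ _ (Fm0 m1) h H).
Qed.

Lemma near1 m x : m = mL -> in01 x -> `|x - 1| < 2^-1 -> Fm f m x = Fm f m 1.
Proof.
move=> -> /andP[a b]; rewrite ltr_norml => /andP[c d]; apply: Fm_hi => /=; lra.
Qed.

Lemma near0 m x : m = mR -> in01 x -> `|x - 0| < 2^-1 -> Fm f m x = Fm f m 0.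
Proof.
move=> -> /andP[a b]; rewrite ltr_norml => /andP[c d]; apply: Fm_lo => /=.
apply/andP; split; lra.
Qed.

Lemma nis1 m1 m2 : m1 = mL \/ m2 = mL -> nis_profile f m1 m2 1 1.
Proof.
move=> Hm; split; first exact: se1.
exists 2^-1; split; first by have [] := andP half_bds.
move=> x1' x2' h1 h2 n1 n2 d1 d2; exfalso.
case: Hm => Hm; [exact/n1/near1|exact/n2/near1].
Qed.

Lemma nis0 m1 m2 : m1 = mR \/ m2 = mR -> nis_profile f m1 m2 0 0.
Proof.
move=> Hm; split; first exact: se0.
exists 2^-1; split; first by have [] := andP half_bds.
move=> x1' x2' h1 h2 n1 n2 d1 d2; exfalso.
case: Hm => Hm; [exact/n1/near0|exact/n2/near0].
Qed.

End F.
End S.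

Theorem mainTheorem13 (R : realType) (f : R -> R) (hf : is_pos_density f)
  (m1 m2 : msg) :
  (strict_eq f m1 m2 (xiL R m1 m2) (xiL R m2 m1) /\
   nis_profile f m1 m2 (xiL R m1 m2) (xiL R m2 m1)) /\
  (strict_eq f m1 m2 (xiR R m1 m2) (xiR R m2 m1) /\
   nis_profile f m1 m2 (xiR R m1 m2) (xiR R m2 m1)).
Proof.
case: m1; case: m2 => /=; split; split;
  (apply: se1 || apply: se0 || apply: nis1 || apply: nis0) => //; by [left|right].
Qed.
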